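(* Let $\mathfrak g$ be a real Lie algebra, $r\in\mathfrak g\otimes\mathfrak g$, and $\kappa\in\mathbb R$. Let $\alpha=(r-r^t)/2$ and $\beta=(r+r^t)/2$ (as linear maps $\mathfrak g^*\to\mathfrak g$), and suppose $\beta$ is invariant, i.e. $(\mathrm{ad}(x)\otimes\mathrm{id}+\mathrm{id}\otimes\mathrm{ad}(x))\beta=0$ for all $x\in\mathfrak g$. Then $r$ satisfies $[r_{12},r_{13}]+[r_{12},r_{23}]+[r_{13},r_{23}]=\frac{\kappa+1}{4}[r_{13}+r_{31},r_{23}+r_{32}]$ if and only if $[\alpha(a^* ),\alpha(b^* )]-\alpha(\mathrm{ad}^*(\alpha(a^* ))b^*-\mathrm{ad}^*(\alpha(b^* ))a^* )=\kappa[\beta(a^* ),\beta(b^* )]$ for all $a^*,b^*\in\mathfrak g^*$.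
   Context: $\mathfrak g$ is finite-dimensional. An element $r\in\mathfrak g\otimes\mathfrak g$ is identified with the linear map $r:\mathfrak g^*\to\mathfrak g$, $\langle r(a^* ),b^*\rangle=\langle a^*\otimes b^*,r\rangle$; $r^t$ is the map induced by $\sigma(r)$, where $\sigma(x\otimes y)=y\otimes x$. The coadjoint representation is $\langle\mathrm{ad}^*(x)a^*,y\rangle=-\langle a^*,[x,y]\rangle$. For $r=\sum_i a_i\otimes b_i$: $[r_{12},r_{13}]=\sum_{i,j}[a_i,a_j]\otimes b_i\otimes b_j$, $[r_{12},r_{23}]=\sum_{i,j}a_i\otimes[b_i,a_j]\otimes b_j$, $[r_{13},r_{23}]=\sum_{i,j}a_i\otimes a_j\otimes[b_i,b_j]$. Writing $s=r+\sigma(r)=\sum_k c_k\otimes d_k$, one has $r_{13}+r_{31}=s_{13}$, $r_{23}+r_{32}=s_{23}$, and $[r_{13}+r_{31},r_{23}+r_{32}]:=\sum_{k,l}c_k\otimes c_l\otimes[d_k,d_l]$. *)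

(* Defs.v *)
(* A finite-dimensional Lie algebra g of dimension n is
   modelled on the coordinate space 'rV[R]_n (basis e_i = delta_mx 0 i);
   its dual g^* is also 'rV[R]_n with pairing <a*, x> = sum_i a*_i x_i. *)
From HB Require Import structures.
From mathcomp Require Import all_boot all_order all_algebra.
Set Implicit Arguments. Unset Strict Implicit. Unset Printing Implicit Defensive.
Import Order.TTheory GRing.Theory Num.Theory.
Local Open Scope ring_scope.

Definition ebasis {R : nzRingType} {n : nat} (i : 'I_n) : 'rV[R]_n := delta_mx 0 i.

Definition is_lie_bracket (R : comNzRingType) (n : nat)
  (br : 'rV[R]_n -> 'rV[R]_n -> 'rV[R]_n) : Prop :=
  [/\ (forall (a : R) x y z, br (a *: x + y) z = a *: br x z + br y z),
      (forall (a : R) x y z, br x (a *: y + z) = a *: br x y + br x z),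
      (forall x, br x x = 0) &
      (forall x y z, br x (br y z) + br y (br z x) + br z (br x y) = 0)].

Definition pairing (R : nzRingType) (n : nat) (a x : 'rV[R]_n) : R :=
  \sum_(i < n) a 0 i * x 0 i.

(* Tensors: an element t of g (x) g is stored by its coefficients,
   t = sum_{i,j} t i j e_i (x) e_j, i.e. as a matrix 'M_n.
   Elements of g (x) g (x) g are stored as coefficient functions. *)
Notation tensor3 R n := {ffun 'I_n * 'I_n * 'I_n -> R^o}.

Definition tens2 (R : comNzRingType) (n : nat) (x y : 'rV[R]_n) : 'M[R]_n :=
  \matrix_(p, q) (x 0 p * y 0 q).

Definition tens3 (R : comNzRingType) (n : nat) (x y z : 'rV[R]_n) : tensor3 R n :=
  [ffun t => x 0 t.1.1 * y 0 t.1.2 * z 0 t.2].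

(* the linear map g^* -> g induced by t in g (x) g:
   <t(a^), b^> = <a* (x) b*, t>, i.e. t(a^) = sum_{i,j} t_ij a^_i e_j (a^ : dual vector) *)
Definition tmap (R : comNzRingType) (n : nat) (t : 'M[R]_n) (a : 'rV[R]_n) : 'rV[R]_n :=
  a *m t.

(* coadjoint action: <ad^*(x) a*, y> = - <a*, [x,y]> *)
Definition coad (R : comNzRingType) (n : nat) (br : 'rV[R]_n -> 'rV[R]_n -> 'rV[R]_n)
  (x a : 'rV[R]_n) : 'rV[R]_n :=
  \row_j (- pairing a (br x (ebasis j))).

(* With r = sum_{i,j} r_ij e_i (x) e_j = sum a_(ij) (x) b_(ij),
   a_(ij) = r_ij e_i, b_(ij) = e_j: *)
(* [r12, r13] = sum [a_i, a_j] (x) b_i (x) b_j *)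
Definition br12_13 (R : comNzRingType) (n : nat) (br : 'rV[R]_n -> 'rV[R]_n -> 'rV[R]_n)
  (r : 'M[R]_n) : tensor3 R n :=
  \sum_(i < n) \sum_(j < n) \sum_(k < n) \sum_(l < n)
     (r i j * r k l) *: tens3 (br (ebasis i) (ebasis k)) (ebasis j) (ebasis l).

(* [r12, r23] = sum a_i (x) [b_i, a_j] (x) b_j *)
Definition br12_23 (R : comNzRingType) (n : nat) (br : 'rV[R]_n -> 'rV[R]_n -> 'rV[R]_n)
  (r : 'M[R]_n) : tensor3 R n :=
  \sum_(i < n) \sum_(j < n) \sum_(k < n) \sum_(l < n)
     (r i j * r k l) *: tens3 (ebasis i) (br (ebasis j) (ebasis k)) (ebasis l).

(* [r13, r23] = sum a_i (x) a_j (x) [b_i, b_j] *)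
Definition br13_23 (R : comNzRingType) (n : nat) (br : 'rV[R]_n -> 'rV[R]_n -> 'rV[R]_n)
  (r : 'M[R]_n) : tensor3 R n :=
  \sum_(i < n) \sum_(j < n) \sum_(k < n) \sum_(l < n)
     (r i j * r k l) *: tens3 (ebasis i) (ebasis k) (br (ebasis j) (ebasis l)).

(* sigma(r) has coefficient matrix r^T; s = r + sigma(r);
   [r13 + r31, r23 + r32] := sum_{k,l} c_k (x) c_l (x) [d_k, d_l] = br13_23 s *)
Definition sym_bracket (R : comNzRingType) (n : nat) (br : 'rV[R]_n -> 'rV[R]_n -> 'rV[R]_n)
  (r : 'M[R]_n) : tensor3 R n :=
  br13_23 br (r + r^T).

Definition invariant_tensor (R : comNzRingType) (n : nat)
  (br : 'rV[R]_n -> 'rV[R]_n -> 'rV[R]_n) (t : 'M[R]_n) : Prop :=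
  forall x : 'rV[R]_n,
    \sum_(i < n) \sum_(j < n)
       t i j *: (tens2 (br x (ebasis i)) (ebasis j) + tens2 (ebasis i) (br x (ebasis j)))
    = 0.

(* Main.v *)
Require Import Defs.
From HB Require Import structures.
From mathcomp Require Import all_boot all_order all_algebra ssrAC.
Import Order.TTheory GRing.Theory Num.Theory.
Set Implicit Arguments. Unset Strict Implicit. Unset Printing Implicit Defensive.
Local Open Scope ring_scope.

Lemma ffD (R : comNzRingType) n (T1 T2 : tensor3 R n) t : (T1 + T2) t = T1 t + T2 t.
Proof. by rewrite /+%R /= ffunE. Qed.
Lemma ffZ (R : comNzRingType) n (k : R) (T : tensor3 R n) t : (k *: T) t = k * T t.
Proof. by rewrite /GRing.scale /= ffunE. Qed.

Lemma dbl0 (V : zmodType) (x : V) : x = x + x -> x = 0.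
Proof. by move=> e; apply: (@addrI _ x); rewrite addr0 -e. Qed.

Section Br.
Local Notation BR R n := ('rV[R]_n -> 'rV[R]_n -> 'rV[R]_n).

Lemma br0l (R : comNzRingType) n (br : BR R n) (h : is_lie_bracket br) z : br 0 z = 0.
Proof.
case: h => hl _ _ _; have := hl 1 0 0 z; rewrite !scale1r addr0.
exact: dbl0.
Qed.
Lemma br0r (R : comNzRingType) n (br : BR R n) (h : is_lie_bracket br) z : br z 0 = 0.
Proof.
case: h => _ hl _ _; have := hl 1 z 0 0; rewrite !scale1r addr0.
exact: dbl0.
Qed.
Lemma brDl (R : comNzRingType) n (br : BR R n) (h : is_lie_bracket br) x y z :
  br (x + y) z = br x z + br y z.
Proof. by case: h => hl _ _ _; rewrite -[x]scale1r hl !scale1r. Qed.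
Lemma brDr (R : comNzRingType) n (br : BR R n) (h : is_lie_bracket br) x y z :
  br z (x + y) = br z x + br z y.
Proof. by case: h => _ hl _ _; rewrite -[x]scale1r hl !scale1r. Qed.
Lemma brZl (R : comNzRingType) n (br : BR R n) (h : is_lie_bracket br) (a : R) x z :
  br (a *: x) z = a *: br x z.
Proof. by have := br0l h z; case: h => hl _ _ _ h0; rewrite -[a *: x]addr0 hl h0 addr0. Qed.
Lemma brZr (R : comNzRingType) n (br : BR R n) (h : is_lie_bracket br) (a : R) x z :
  br z (a *: x) = a *: br z x.
Proof. by have := br0r h z; case: h => _ hl _ _ h0; rewrite -[a *: x]addr0 hl h0 addr0. Qed.
Lemma brNl (R : comNzRingType) n (br : BR R n) (h : is_lie_bracket br) x z :
  br (- x) z = - br x z.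
Proof. by rewrite -scaleN1r brZl // scaleN1r. Qed.
Lemma brNr (R : comNzRingType) n (br : BR R n) (h : is_lie_bracket br) x z :
  br z (- x) = - br z x.
Proof. by rewrite -scaleN1r brZr // scaleN1r. Qed.
Lemma brBl (R : comNzRingType) n (br : BR R n) (h : is_lie_bracket br) x y z :
  br (x - y) z = br x z - br y z.
Proof. by rewrite brDl // brNl. Qed.
Lemma brBr (R : comNzRingType) n (br : BR R n) (h : is_lie_bracket br) x y z :
  br z (x - y) = br z x - br z y.
Proof. by rewrite brDr // brNr. Qed.
Lemma br_anti (R : comNzRingType) n (br : BR R n) (h : is_lie_bracket br) x y :
  br x y = - br y x.
Proof.
have := h; case=> _ _ ha _; have := ha (x + y).
rewrite brDl // brDr // brDr // ha ha.
rewrite add0r addr0 => /eqP; rewrite addr_eq0 => /eqP.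
by [].
Qed.
Lemma br_sumr (R : comNzRingType) n (br : BR R n) (h : is_lie_bracket br) x (F : 'I_n -> 'rV[R]_n) :
  br x (\sum_i F i) = \sum_i br x (F i).
Proof. exact: (big_morph (br x) (fun a b => brDr h a b x) (br0r h x)). Qed.
Lemma br_suml (R : comNzRingType) n (br : BR R n) (h : is_lie_bracket br) x (F : 'I_n -> 'rV[R]_n) :
  br (\sum_i F i) x = \sum_i br (F i) x.
Proof. exact: (big_morph (fun y => br y x) (fun a b => brDl h a b x) (br0l h x)). Qed.
Lemma br_expr (R : comNzRingType) n (br : BR R n) (h : is_lie_bracket br) x y :
  br x y = \sum_j y 0 j *: br x (ebasis j).
Proof. by rewrite {1}(row_sum_delta y) br_sumr //; apply: eq_bigr => j _; rewrite brZr. Qed.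
Lemma br_expl (R : comNzRingType) n (br : BR R n) (h : is_lie_bracket br) x y :
  br x y = \sum_j x 0 j *: br (ebasis j) y.
Proof. by rewrite {1}(row_sum_delta x) br_suml //; apply: eq_bigr => j _; rewrite brZl. Qed.
End Br.

Lemma pairingC (R : comNzRingType) n (a x : 'rV[R]_n) : pairing a x = pairing x a.
Proof. by apply: eq_bigr => i _; rewrite mulrC. Qed.
Lemma pairingDr (R : comNzRingType) n (a x y : 'rV[R]_n) :
  pairing a (x + y) = pairing a x + pairing a y.
Proof. by rewrite /pairing -big_split; apply: eq_bigr => i _; rewrite mxE mulrDr. Qed.
Lemma pairingZr (R : comNzRingType) n (k : R) (a x : 'rV[R]_n) :
  pairing a (k *: x) = k * pairing a x.
Proof. by rewrite /pairing mulr_sumr; apply: eq_bigr => i _; rewrite mxE mulrCA. Qed.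
Lemma pairingNr (R : comNzRingType) n (a x : 'rV[R]_n) :
  pairing a (- x) = - pairing a x.
Proof. by rewrite -scaleN1r pairingZr mulN1r. Qed.
Lemma pairingBr (R : comNzRingType) n (a x y : 'rV[R]_n) :
  pairing a (x - y) = pairing a x - pairing a y.
Proof. by rewrite pairingDr pairingNr. Qed.
Lemma pairing0r (R : comNzRingType) n (a : 'rV[R]_n) : pairing a 0 = 0.
Proof. by rewrite /pairing big1 // => i _; rewrite mxE mulr0. Qed.
Lemma pairing_sumr (R : comNzRingType) n (a : 'rV[R]_n) (F : 'I_n -> 'rV[R]_n) :
  pairing a (\sum_i F i) = \sum_i pairing a (F i).
Proof. exact: (big_morph (pairing a) (pairingDr a) (pairing0r a)). Qed.
Lemma sum_delta (R : comNzRingType) n (f : 'I_n -> R) j :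
  \sum_i f i * (ebasis j : 'rV[R]_n) 0 i = f j.
Proof.
rewrite (bigD1 j) //= big1 ?addr0 => [|i /negPf ne]; rewrite mxE ?eqxx ?ne ?mulr0 //.
by rewrite mulr1.
Qed.
Lemma pairing_e (R : comNzRingType) n (a : 'rV[R]_n) j : pairing a (ebasis j) = a 0 j.
Proof. exact: sum_delta. Qed.

Lemma tmapT (R : comNzRingType) n (A : 'M[R]_n) (u v : 'rV[R]_n) :
  pairing (tmap A u) v = pairing (tmap A^T v) u.
Proof.
rewrite /pairing /tmap.
under eq_bigr do rewrite mxE mulr_suml.
under [RHS]eq_bigr do rewrite mxE mulr_suml.
rewrite exchange_big; apply: eq_bigr => i _; apply: eq_bigr => j _.
by rewrite mxE mulrC [u 0 i * _]mulrC mulrA.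
Qed.
Lemma tmapD (R : comNzRingType) n (A B : 'M[R]_n) u : tmap (A + B) u = tmap A u + tmap B u.
Proof. exact: mulmxDr. Qed.
Lemma tmapB (R : comNzRingType) n (A B : 'M[R]_n) u : tmap (A - B) u = tmap A u - tmap B u.
Proof. exact: mulmxBr. Qed.
Lemma tmapN (R : comNzRingType) n (A : 'M[R]_n) u : tmap (- A) u = - tmap A u.
Proof. exact: mulmxN. Qed.
Lemma tmapZ (R : comNzRingType) n (k : R) (A : 'M[R]_n) u : tmap (k *: A) u = k *: tmap A u.
Proof. by rewrite /tmap scalemxAr. Qed.

Lemma coadP (R : comNzRingType) n (br : 'rV[R]_n -> 'rV[R]_n -> 'rV[R]_n)
  (h : is_lie_bracket br) x a y :
  pairing (coad br x a) y = - pairing a (br x y).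
Proof.
rewrite (br_expr h) pairing_sumr -sumrN; apply: eq_bigr => j _.
by rewrite !mxE pairingZr mulNr mulrC.
Qed.

Definition P3 (R : comNzRingType) n (T : tensor3 R n) (a b c : 'rV[R]_n) : R :=
  \sum_p \sum_q \sum_s T (p, q, s) * (a 0 p * b 0 q * c 0 s).

Lemma P3D (R : comNzRingType) n (T1 T2 : tensor3 R n) a b c :
  P3 (T1 + T2) a b c = P3 T1 a b c + P3 T2 a b c.
Proof.
rewrite /P3 -big_split; apply: eq_bigr => p _; rewrite -big_split; apply: eq_bigr => q _.
by rewrite -big_split; apply: eq_bigr => s _; rewrite ffD mulrDl.
Qed.
Lemma P3Z (R : comNzRingType) n (k : R) (T : tensor3 R n) a b c :
  P3 (k *: T) a b c = k * P3 T a b c.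
Proof.
rewrite /P3 mulr_sumr; apply: eq_bigr => p _; rewrite mulr_sumr; apply: eq_bigr => q _.
by rewrite mulr_sumr; apply: eq_bigr => s _; rewrite ffZ; exact: (esym (mulrA _ _ _)).
Qed.
Lemma P30 (R : comNzRingType) n (a b c : 'rV[R]_n) : P3 0 a b c = 0.
Proof. by rewrite -(scale0r 0) P3Z mul0r. Qed.
Lemma P3_sum (R : comNzRingType) n (F : 'I_n -> tensor3 R n) a b c :
  P3 (\sum_i F i) a b c = \sum_i P3 (F i) a b c.
Proof. exact: (big_morph (fun T => P3 T a b c) (fun T1 T2 => P3D T1 T2 a b c) (P30 a b c)). Qed.
Lemma m3 (R : comNzRingType) (x y z a b c : R) : x*y*z*(a*b*c) = a*x*(b*y)*(c*z).
Proof. by rewrite mulrACA [x*y*_]mulrACA (mulrC x) (mulrC y) (mulrC z). Qed.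
Lemma P3_tens (R : comNzRingType) n (x y z a b c : 'rV[R]_n) :
  P3 (tens3 x y z) a b c = pairing a x * pairing b y * pairing c z.
Proof.
rewrite /P3 /pairing.
rewrite [(\sum_i a 0 i * _) * _]big_distrl [(\sum_i _) * (\sum_i c 0 i * _)]big_distrl /=.
apply: eq_bigr => p _.
rewrite [_ * (\sum_i b 0 i * _)]big_distrr [(\sum_i _) * (\sum_i c 0 i * _)]big_distrl /=.
apply: eq_bigr => q _.
rewrite [_ * (\sum_i c 0 i * _)]big_distrr /=; apply: eq_bigr => s _.
by rewrite ffunE /= m3.
Qed.
Lemma P3_e (R : comNzRingType) n (T : tensor3 R n) p q s :
  P3 T (ebasis p) (ebasis q) (ebasis s) = T (p, q, s).
Proof.
rewrite /P3.
transitivity (\sum_i \sum_j \sum_k ((T (i, j, k) : R) * (ebasis p : 'rV[R]_n) 0 i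
   * (ebasis q : 'rV[R]_n) 0 j) * (ebasis s : 'rV[R]_n) 0 k).
  by apply: eq_bigr => i _; apply: eq_bigr => j _; apply: eq_bigr => k _; rewrite !mulrA.
under eq_bigr do under eq_bigr do rewrite sum_delta.
under eq_bigr do rewrite sum_delta.
by rewrite sum_delta.
Qed.

Lemma sum4 (R : comNzRingType) n (f U V : 'I_n -> 'I_n -> R) :
  \sum_i \sum_k (\sum_j U i j) * (\sum_l V k l) * f i k
  = \sum_i \sum_j \sum_k \sum_l U i j * V k l * f i k.
Proof.
apply: eq_bigr => i _.
transitivity (\sum_k \sum_j \sum_l U i j * V k l * f i k).
  apply: eq_bigr => k _; rewrite big_distrl big_distrl /=; apply: eq_bigr => j _.
  by rewrite big_distrr big_distrl.
by rewrite exchange_big.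
Qed.

Lemma bexp (R : comNzRingType) n (br : 'rV[R]_n -> 'rV[R]_n -> 'rV[R]_n)
  (h : is_lie_bracket br) a u v :
  pairing a (br u v) = \sum_i \sum_k u 0 i * v 0 k * pairing a (br (ebasis i) (ebasis k)).
Proof.
rewrite (br_expl h) pairing_sumr; apply: eq_bigr => i _.
rewrite pairingZr (br_expr h) pairing_sumr big_distrr /=; apply: eq_bigr => k _.
by rewrite pairingZr mulrA.
Qed.

Lemma tmapE (R : comNzRingType) n (t : 'M[R]_n) a j :
  (tmap t a) 0 j = \sum_i a 0 i * t i j.
Proof. by rewrite /tmap mxE. Qed.
Lemma tmapTE (R : comNzRingType) n (t : 'M[R]_n) a j :
  (tmap t^T a) 0 j = \sum_i a 0 i * t j i.
Proof. by rewrite /tmap mxE; apply: eq_bigr => i _; rewrite mxE. Qed.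

Lemma P3_12_13 (R : comNzRingType) n (br : 'rV[R]_n -> 'rV[R]_n -> 'rV[R]_n)
  (h : is_lie_bracket br) r a b c :
  P3 (br12_13 br r) a b c = pairing a (br (tmap r^T b) (tmap r^T c)).
Proof.
rewrite (bexp h).
under eq_bigr do under eq_bigr do rewrite !tmapTE.
rewrite sum4 /br12_13 P3_sum; apply: eq_bigr => i _; rewrite P3_sum; apply: eq_bigr => j _.
rewrite P3_sum; apply: eq_bigr => k _; rewrite P3_sum; apply: eq_bigr => l _.
rewrite P3Z P3_tens !pairing_e.
by rewrite [LHS](AC (2*3) ((4*1)*(5*2)*3)).
Qed.

Lemma P3_12_23 (R : comNzRingType) n (br : 'rV[R]_n -> 'rV[R]_n -> 'rV[R]_n)
  (h : is_lie_bracket br) r a b c :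
  P3 (br12_23 br r) a b c = pairing b (br (tmap r a) (tmap r^T c)).
Proof.
rewrite (bexp h).
under eq_bigr do under eq_bigr do rewrite tmapE tmapTE.
rewrite sum4 exchange_big /br12_23 P3_sum; apply: eq_bigr => i _; rewrite P3_sum; apply: eq_bigr => j _.
rewrite P3_sum; apply: eq_bigr => k _; rewrite P3_sum; apply: eq_bigr => l _.
rewrite P3Z P3_tens !pairing_e.
by rewrite [LHS](AC (2*3) ((3*1)*(5*2)*4)).
Qed.

Lemma P3_13_23 (R : comNzRingType) n (br : 'rV[R]_n -> 'rV[R]_n -> 'rV[R]_n)
  (h : is_lie_bracket br) r a b c :
  P3 (br13_23 br r) a b c = pairing c (br (tmap r a) (tmap r b)).
Proof.
rewrite (bexp h).
under eq_bigr do under eq_bigr do rewrite !tmapE.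
rewrite sum4 exchange_big /br13_23 P3_sum; apply: eq_bigr => i _; rewrite P3_sum; apply: eq_bigr => j _.
rewrite exchange_big P3_sum; apply: eq_bigr => k _; rewrite P3_sum; apply: eq_bigr => l _.
rewrite P3Z P3_tens !pairing_e.
by rewrite [LHS](AC (2*3) ((3*1)*(4*2)*5)).
Qed.

Definition P2 (R : comNzRingType) n (M : 'M[R]_n) (a b : 'rV[R]_n) : R :=
  \sum_p \sum_q M p q * (a 0 p * b 0 q).
Lemma P2D (R : comNzRingType) n (M1 M2 : 'M[R]_n) a b :
  P2 (M1 + M2) a b = P2 M1 a b + P2 M2 a b.
Proof.
rewrite /P2 -big_split; apply: eq_bigr => p _; rewrite -big_split; apply: eq_bigr => q _.
by rewrite mxE mulrDl.
Qed.
Lemma P2Z (R : comNzRingType) n (k : R) (M : 'M[R]_n) a b :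
  P2 (k *: M) a b = k * P2 M a b.
Proof.
rewrite /P2 mulr_sumr; apply: eq_bigr => p _; rewrite mulr_sumr; apply: eq_bigr => q _.
by rewrite mxE; exact: (esym (mulrA _ _ _)).
Qed.
Lemma P20 (R : comNzRingType) n (a b : 'rV[R]_n) : P2 0 a b = 0.
Proof. by rewrite -(scale0r 0) P2Z mul0r. Qed.
Lemma P2_sum (R : comNzRingType) n (F : 'I_n -> 'M[R]_n) a b :
  P2 (\sum_i F i) a b = \sum_i P2 (F i) a b.
Proof. exact: (big_morph (fun T => P2 T a b) (fun T1 T2 => P2D T1 T2 a b) (P20 a b)). Qed.
Lemma P2_tens (R : comNzRingType) n (x y a b : 'rV[R]_n) :
  P2 (tens2 x y) a b = pairing a x * pairing b y.
Proof.
rewrite /P2 /pairing big_distrl /=; apply: eq_bigr => p _.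
rewrite big_distrr /=; apply: eq_bigr => q _.
by rewrite mxE [LHS](AC (2*2) ((3*1)*(4*2))).
Qed.

Lemma pbr_lin (R : comNzRingType) n (br : 'rV[R]_n -> 'rV[R]_n -> 'rV[R]_n)
  (h : is_lie_bracket br) u x w :
  pairing u (br x w) = \sum_j w 0 j * pairing u (br x (ebasis j)).
Proof. by rewrite (br_expr h) pairing_sumr; apply: eq_bigr => j _; rewrite pairingZr. Qed.

Lemma inv_pair (R : comNzRingType) n (br : 'rV[R]_n -> 'rV[R]_n -> 'rV[R]_n)
  (h : is_lie_bracket br) (t : 'M[R]_n) :
  invariant_tensor br t -> (forall i j, t i j = t j i) ->
  forall x u v, pairing u (br x (tmap t v)) = - pairing v (br x (tmap t u)).
Proof.
move=> H ts x u v; apply/eqP; rewrite -addr_eq0; apply/eqP.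
have := congr1 (fun M => P2 M u v) (H x); rewrite /= P20 => <-.
rewrite !(pbr_lin h) P2_sum.
under [RHS]eq_bigr do rewrite P2_sum.
under [RHS]eq_bigr do under eq_bigr do rewrite P2Z P2D !P2_tens !pairing_e mulrDr.
under [RHS]eq_bigr do rewrite big_split /=.
rewrite big_split /=; congr (_ + _).
  apply: eq_bigr => i _; rewrite tmapE big_distrl /=; apply: eq_bigr => j _.
  by rewrite ts [LHS](ACl (2*(3*1))).
rewrite exchange_big; apply: eq_bigr => j _; rewrite tmapE big_distrl /=; apply: eq_bigr => i _.
by rewrite [LHS](ACl (2*(1*3))).
Qed.

Lemma fin (R: comNzRingType) (A1 A2 A3 A4 Q1 Q2 Q3 k : R) :
 A1 - - A2 + (- A3 + Q1) + (- A4 - Q2 + (- A1 - A2)) + (Q3 + A4 + (A3 + A1)) - (k + 1) * A1 = Q3 - (Q2 - Q1) - k * A1.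
Proof.
rewrite mulrDl mul1r !opprK !opprD ?opprB !addrA.
by rewrite [LHS](ACl (9*6*4*13*1*7*2*8*3*11*5*10*12*14)) /= !addrK !subrK opprK.
Qed.

Theorem theorem3p9 (R : realFieldType) (n : nat)
  (br : 'rV[R]_n -> 'rV[R]_n -> 'rV[R]_n) (hlie : is_lie_bracket br)
  (r : 'M[R]_n) (kappa : R) :
  let alpha := tmap (2^-1 *: (r - r^T)) in
  let beta_t := 2^-1 *: (r + r^T) in
  let beta := tmap beta_t in
  invariant_tensor br beta_t ->
  (br12_13 br r + br12_23 br r + br13_23 br r
     = ((kappa + 1) / 4) *: sym_bracket br r
   <->
   forall a b : 'rV[R]_n,
     br (alpha a) (alpha b)
       - alpha (coad br (alpha a) b - coad br (alpha b) a)
     = kappa *: br (beta a) (beta b)).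
Proof.
move=> alpha beta_t beta Hinv.
have h2 : (2 : R) != 0 by rewrite pnatr_eq0.
have hsym : forall i j, beta_t i j = beta_t j i.
  by move=> i j; rewrite !mxE addrC.
have HI : forall x u v, pairing u (br x (beta v)) = - pairing v (br x (beta u)).
  exact: (inv_pair hlie Hinv hsym).
have Hal : forall u v, pairing (alpha u) v = - pairing (alpha v) u.
  move=> u v; rewrite /alpha tmapT.
  have -> : (2^-1 *: (r - r^T))^T = - (2^-1 *: (r - r^T)).
    by apply/matrixP => i j; rewrite !mxE -mulrN opprB.
  by rewrite /tmap mulmxN pairingC pairingNr pairingC.
have hr : forall a, tmap r a = alpha a + beta a.
  move=> a; rewrite /alpha /beta -tmapD -scalerDr addrACA addNr addr0.
  by rewrite -mulr2n -scaler_nat scalerA mulVf // scale1r.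
have hrT : forall a, tmap r^T a = beta a - alpha a.
  move=> a; rewrite /alpha /beta -tmapB -scalerBr opprB (addrC r) addrACA subrr addr0.
  by rewrite -mulr2n -scaler_nat scalerA mulVf // scale1r.
have hs : forall a, tmap (r + r^T) a = 2 *: beta a.
  by move=> a; rewrite /beta tmapZ scalerA mulfV // scale1r.
have hA : forall c x y a b, pairing c (alpha (coad br x b - coad br y a))
    = pairing b (br x (alpha c)) - pairing a (br y (alpha c)).
  move=> c x y a b; rewrite pairingC Hal pairingBr pairingC (pairingC _ (coad _ _ a)).
  by rewrite !(coadP hlie) opprB addrC opprK.
have f1 : forall a b c, pairing a (br (beta b) (beta c)) = pairing c (br (beta a) (beta b)).
  by move=> a b c; rewrite (HI (beta b) a c) (br_anti hlie (beta b)) pairingNr opprK.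
have f2 : forall a b c, pairing b (br (beta a) (beta c)) = - pairing c (br (beta a) (beta b)).
  by move=> a b c; exact: (HI (beta a) b c).
have f3 : forall a b c, pairing a (br (alpha b) (beta c)) = pairing c (br (beta a) (alpha b)).
  by move=> a b c; rewrite (HI (alpha b) a c) (br_anti hlie (alpha b)) pairingNr opprK.
have f4 : forall a b c, pairing b (br (alpha a) (beta c)) = - pairing c (br (alpha a) (beta b)).
  by move=> a b c; exact: (HI (alpha a) b c).
have f5 : forall a b c, pairing a (br (beta b) (alpha c)) = - pairing b (br (beta a) (alpha c)).
  move=> a b c; rewrite (br_anti hlie (beta b)) pairingNr (HI (alpha c) a b) opprK.
  by rewrite (br_anti hlie (alpha c)) pairingNr.
have f6 : forall x y : R, x / 4 * (2 * (2 * y)) = x * y.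
  move=> x y; rewrite (mulrA 2 2 y) -natrM mulrA -(mulrA x) mulVf ?mulr1 //.
  by rewrite pnatr_eq0.
have key : forall a b c,
    P3 (br12_13 br r + br12_23 br r + br13_23 br r) a b c
    - P3 (((kappa + 1) / 4) *: sym_bracket br r) a b c
    = pairing c (br (alpha a) (alpha b)
       - alpha (coad br (alpha a) b - coad br (alpha b) a)
       - kappa *: br (beta a) (beta b)).
  move=> a b c.
  rewrite !P3D P3Z /sym_bracket (P3_12_13 hlie) (P3_12_23 hlie) !(P3_13_23 hlie).
  rewrite !hrT !hr !hs !(brZl hlie) !(brZr hlie) !pairingZr.
  rewrite !pairingBr hA pairingZr.
  rewrite !(brDl hlie) !(brDr hlie) ?(brNl hlie) ?(brNr hlie) ?pairingDr ?pairingNr ?opprK.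
  rewrite (f1 a b c) (f5 a b c) (f3 a b c) (f4 a b c) (f2 a b c) f6; exact: fin.
split.
  move=> E a b; apply/eqP; rewrite -subr_eq0; apply/eqP; apply/rowP => s.
  have := key a b (ebasis s); rewrite E subrr pairingC pairing_e => <-.
  by rewrite mxE.
move=> E; apply/ffunP => [[[p q] s]].
have := key (ebasis p) (ebasis q) (ebasis s).
rewrite !P3_e E subrr pairing0r => /eqP; rewrite subr_eq0 => /eqP.
by [].
Qed.
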